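(* Let $n,k\ge1$ and let $\bar x,\bar y\in\mathbb{Z}/2^{n+k-1}\mathbb{Z}$. There is an arrow (of either colour) from $\overline{H}_{M_k}(\bar x)$ to $\overline{H}_{M_k}(\bar y)$ in $\Gamma_{2^n}$ if and only if there exist $\bar a\in[\bar x]$ and $\bar b\in[\bar y]$ with an arrow $\bar a\to\bar b$ in $\Gamma_{2^{n+k-1}}$. Moreover, in that case the arrows of $\Gamma_{2^{n+k-1}}$ from elements of $[\bar x]$ to elements of $[\bar y]$ define a bijection $[\bar x]\to[\bar y]$ (each element of $[\bar x]$ has exactly one such outgoing arrow and each element of $[\bar y]$ exactly one such incoming arrow).
   Context: $T(x)=x/2$ for $x$ even, $T(x)=(3x+1)/2$ for $x$ odd, extended to $\mathbb{Z}_2$; $T_0(x)=x/2$, $T_1(x)=(3x+1)/2$. $\Gamma_d$ is the directed graph on $\mathbb{Z}/d\mathbb{Z}$ with a black arrow $r\to s$ iff there exist positive integers $x\equiv r$, $y\equiv s\pmod d$ with $x$ even and $T_0(x)=y$, and a red arrow $r\to s$ iff there exist such $x,y$ with $x$ odd and $T_1(x)=y$. The parity vector map $\Phi^{-1}:\mathbb{Z}_2\to\mathbb{Z}_2$ is $\Phi^{-1}(x)=\sum_{i\ge0}(T^i(x)\bmod 2)2^i$; it is a bijection with inverse $\Phi$. For $k\ge1$, $M_k(\sum_i a_i2^i)=\sum_i m_i2^i$ with $m_i\equiv a_i+\cdots+a_{i+k-1}\pmod2$, and $H_{M_k}=\Phi\circ M_k\circ\Phi^{-1}$, which commutes with $T$.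 The residue of $H_{M_k}(x)$ mod $2^n$ depends only on $x$ mod $2^{n+k-1}$; $\overline{H}_{M_k}:\mathbb{Z}/2^{n+k-1}\mathbb{Z}\to\mathbb{Z}/2^n\mathbb{Z}$ is the induced map, and $[\bar x]=\overline{H}_{M_k}^{-1}(\{\overline{H}_{M_k}(\bar x)\})$. *)

(* Defs.v *)
From mathcomp Require Import all_boot.
From Stdlib Require Import ClassicalEpsilon.
Set Implicit Arguments. Unset Strict Implicit. Unset Printing Implicit Defensive.

(* 2-adic integers represented by their binary digit streams:
   x = sum_i (x i) 2^i. *)
Definition Z2 := nat -> bool.

Fixpoint trunc (x : Z2) (m : nat) : nat :=
  if m is m'.+1 then trunc x m' + x m' * 2 ^ m' else 0.

Definition of_nat (r : nat) : Z2 := fun i => odd (r %/ 2 ^ i).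

Definition Tnat (x : nat) : nat := if odd x then (3 * x + 1)./2 else x./2.

(* Its (unique continuous) extension to Z_2: T(x) mod 2^(i+1) only depends
   on x mod 2^(i+2), so bit i of T(x) is bit i of Tnat (x mod 2^(i+2)). *)
Definition T (x : Z2) : Z2 := fun i => odd (Tnat (trunc x i.+2) %/ 2 ^ i).

Definition PhiInv (x : Z2) : Z2 := fun i => iter i T x 0.

(* Phi = inverse of Phi^{-1} (a bijection of Z_2) *)
Definition Phi (v : Z2) : Z2 :=
  epsilon (inhabits (fun _ : nat => false)) (fun x : Z2 => PhiInv x = v).

Definition Mk (k : nat) (a : Z2) : Z2 :=
  fun i => odd (\sum_(j < k) nat_of_bool (a (i + j))).

Definition HM (k : nat) (x : Z2) : Z2 := Phi (Mk k (PhiInv x)).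

(* induced map Z/2^(n+k-1) -> Z/2^n (residues represented by naturals < modulus) *)
Definition HMbar (n k r : nat) : nat := trunc (HM k (of_nat r)) n.

Definition inClass (n k x a : nat) : Prop :=
  a < 2 ^ (n + k - 1) /\ HMbar n k a = HMbar n k x.

Definition black_arrow (d r s : nat) : Prop :=
  exists x y : nat, [/\ 0 < x, 0 < y, x %% d = r, y %% d = s
                      & ~~ odd x /\ x./2 = y].
Definition red_arrow (d r s : nat) : Prop :=
  exists x y : nat, [/\ 0 < x, 0 < y, x %% d = r, y %% d = s
                      & odd x /\ (3 * x + 1)./2 = y].
Definition arrow (d r s : nat) : Prop := black_arrow d r s \/ red_arrow d r s.

(* Main.v *)
Require Import Defs.
From mathcomp Require Import all_boot zify.
From Stdlib Require Import ClassicalEpsilon FunctionalExtensionality.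

Definition par (a i : nat) : bool := odd (iter i Tnat a).

Lemma TSTEP s j c : 0 < j -> exists c', Tnat (s + 2^j * c) = Tnat s + 2^(j.-1) * c' /\ odd c' = odd c.
Proof.
case: j => // j _ /=. rewrite expnS.
set X := 2^j * c.
have -> : 2 * 2 ^ j * c = 2 * X by rewrite /X mulnA.
rewrite /Tnat oddD oddM /= addbF.
case: (odd s) => /=.
- exists (3 * c); split; last by rewrite oddM.
  rewrite /X. lia.
- exists c; split => //. rewrite /X. lia.
Qed.

Lemma L_ITER i j s c : i <= j -> exists c', iter i Tnat (s + 2^j * c) = iter i Tnat s + 2^(j-i) * c' /\ odd c' = odd c.
Proof.
elim: i => [|i IH] Hi.
  by exists c; rewrite subn0.
have [c' [E O]] := IH (ltnW Hi).
have [c'' [E' O']] := @TSTEP (iter i Tnat s) (j - i) c' ltac:(lia).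
exists c''; split; last by rewrite O' O.
rewrite !iterS E E'. congr (_ + 2 ^ _ * _). lia.
Qed.

Lemma PARAGREE s c m i : i < m -> par (s + 2^m * c) i = par s i.
Proof.
move=> H. have [c' [E _]] := @L_ITER i m s c (ltnW H).
rewrite /par E oddD oddM oddX.
have -> : (m - i == 0) = false by lia.
by rewrite /= addbF.
Qed.

Lemma PARFLIP s c m : par (s + 2^m * c) m = par s m (+) odd c.
Proof.
have [c' [E O]] := @L_ITER m m s c (leqnn m).
by rewrite /par E subnn expn0 mul1n oddD O.
Qed.

Lemma MODINV m r s i : r %% 2^m = s %% 2^m -> i < m -> par r i = par s i.
Proof.
move=> E Hi.
rewrite (divn_eq r (2^m)) (divn_eq s (2^m)) E addnC mulnC PARAGREE //.
by rewrite addnC mulnC PARAGREE.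
Qed.

Lemma INJ m r s : r < 2^m -> s < 2^m -> (forall i, i < m -> par r i = par s i) -> r = s.
Proof.
elim: m r s => [|m IH] r s.
  rewrite expn0 => Hr Hs _. lia.
move=> Hr Hs Hp.
have Hm : 0 < 2^m by rewrite expn_gt0.
have E : r %% 2^m = s %% 2^m.
  apply: IH; try by rewrite ltn_pmod.
  move=> i Hi. rewrite (@MODINV m (r %% 2^m) r i) ?modn_mod //.
  rewrite (@MODINV m (s %% 2^m) s i) ?modn_mod //. by apply: Hp; lia.
have Hrq : r %/ 2^m < 2 by rewrite ltn_divLR // -expnS.
have Hsq : s %/ 2^m < 2 by rewrite ltn_divLR // -expnS.
have := Hp m (ltnSn m).
rewrite (divn_eq r (2^m)) (divn_eq s (2^m)) [_ * 2^m + _]addnC [_ * 2^m + (s %% _)]addnC.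
rewrite ![_ * 2^m]mulnC !PARFLIP E => /addbI Hq.
rewrite (divn_eq r (2^m)) (divn_eq s (2^m)) E.
have : r %/ 2^m = s %/ 2^m.
  move: Hq Hrq Hsq. case: (r %/ 2^m) => [|[|]]; case: (s %/ 2^m) => [|[|]] //.
by move=> ->.
Qed.

Lemma SURJ m (w : nat -> bool) : exists r, r < 2^m /\ forall i, i < m -> par r i = w i.
Proof.
elim: m => [|m [r [Hr Hp]]].
  by exists 0; split => // i.
have Hm : 0 < 2^m by rewrite expn_gt0.
case E: (par r m == w m).
- exists r; split. rewrite expnS. lia.
  move=> i Hi. case: (ltngtP i m) => [Hl||->]; [by apply: Hp| lia | by apply/eqP].
- exists (r + 2^m * 1); split. rewrite expnS. lia.
  move=> i Hi. case: (ltngtP i m) => [Hl||->]; [by rewrite PARAGREE // Hp| lia |].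
  rewrite PARFLIP /=. move/negbT: E. by case: (par r m); case: (w m).
Qed.

Lemma trunc_lt x m : trunc x m < 2^m.
Proof.
elim: m => [|m IH] //=. rewrite expnS. case: (x m) => /=; lia.
Qed.

Lemma trunc_mod x m j : j <= m -> trunc x m %% 2^j = trunc x j.
Proof.
elim: m j => [|m IH] j Hj.
  have -> : j = 0 by lia. by rewrite modn_small.
case: (ltngtP j m.+1) => [Hl||->]; last first.
- by rewrite modn_small // trunc_lt.
- lia.
rewrite /= -(IH j); last lia.
have -> : 2 ^ m = 2^(m - j) * 2^j.
  by rewrite -expnD subnK //; lia.
by rewrite mulnA addnC modnMDl.
Qed.

Lemma MODSPLIT a m : a %% 2^m.+1 = a %% 2^m + odd (a %/ 2^m) * 2^m.
Proof.
have Hm : 0 < 2^m by rewrite expn_gt0.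
set q := a %/ 2^m. set r := a %% 2^m.
have Hr : r < 2^m by rewrite ltn_pmod.
have E : a = q./2 * 2^m.+1 + (odd q * 2^m + r).
  rewrite expnS {1}(divn_eq a (2^m)) -/q -/r.
  have := odd_double_half q. lia.
rewrite {1}E modnMDl modn_small; first lia.
rewrite expnS. case: (odd q); lia.
Qed.

Lemma trunc_ext x x' m : (forall i, i < m -> x i = x' i) -> trunc x m = trunc x' m.
Proof.
elim: m => [|m IH] H //=. rewrite IH ?H //. move=> i Hi; apply: H; lia.
Qed.

Lemma trunc_ofnat a m : trunc (of_nat a) m = a %% 2^m.
Proof.
elim: m => [|m IH] /=; first by rewrite modn1.
by rewrite IH MODSPLIT.
Qed.

Lemma BIT a b i : a %% 2^i.+1 = b %% 2^i.+1 -> odd (a %/ 2^i) = odd (b %/ 2^i).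
Proof.
move=> E.
have Ha := MODSPLIT a i. have Hb := MODSPLIT b i.
have Ea : a %% 2^i = (a %% 2^i.+1) %% 2^i by rewrite modn_dvdm // dvdn_exp2l.
have Eb : b %% 2^i = (b %% 2^i.+1) %% 2^i by rewrite modn_dvdm // dvdn_exp2l.
rewrite E in Ha Ea. rewrite -Eb in Ea. rewrite Ea Hb in Ha.
have Hm : 0 < 2^i by rewrite expn_gt0.
move: Ha. case: (odd (a %/ 2^i)); case: (odd (b %/ 2^i)) => //=; lia.
Qed.

Lemma TCONG a b m : a %% 2^m.+1 = b %% 2^m.+1 -> Tnat a %% 2^m = Tnat b %% 2^m.
Proof.
move=> E.
have [ca [Ea _]] := @TSTEP (a %% 2^m.+1) m.+1 (a %/ 2^m.+1) isT.
have [cb [Eb _]] := @TSTEP (b %% 2^m.+1) m.+1 (b %/ 2^m.+1) isT.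
rewrite [a in LHS](divn_eq a (2^m.+1)) [b in RHS](divn_eq b (2^m.+1)).
rewrite ![_ %/ _ * _]mulnC ![_ * _ + _]addnC Ea Eb /= E.
by rewrite ![_ + 2^m * _]addnC ![2^m * _]mulnC !modnMDl.
Qed.

Lemma L0 y m : trunc (T y) m = Tnat (trunc y m.+1) %% 2^m.
Proof.
rewrite -trunc_ofnat. apply: trunc_ext => i Hi.
rewrite /T /of_nat. apply: BIT. apply: TCONG.
rewrite !trunc_mod //; lia.
Qed.

Lemma L1 i m x : trunc (iter i T x) m = iter i Tnat (trunc x (i + m)) %% 2^m.
Proof.
elim: i m => [|i IH] m /=.
  by rewrite modn_small // trunc_lt.
rewrite L0 IH. apply: TCONG. by rewrite modn_mod addnS.
Qed.

Lemma PhiInv_par x i : PhiInv x i = par (trunc x i.+1) i.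
Proof.
rewrite /PhiInv.
have := L1 i 1 x. rewrite /= expn1 muln1 modn2 addn1 => E.
rewrite /par. move/(congr1 odd): E. rewrite /= !oddb. by [].
Qed.

Lemma PhiInv_par' x i m : i < m -> PhiInv x i = par (trunc x m) i.
Proof.
move=> H. rewrite PhiInv_par. apply: (@MODINV i.+1) => //.
by rewrite !trunc_mod.
Qed.

Lemma PhiInv_ofnat a i : PhiInv (of_nat a) i = par a i.
Proof.
rewrite PhiInv_par trunc_ofnat. apply: (@MODINV i.+1) => //. by rewrite modn_mod.
Qed.

Lemma SURJS (v : Z2) : exists z, PhiInv z = v.
Proof.
pose f m := constructive_indefinite_description _ (SURJ m v).
pose z : Z2 := fun i => odd (sval (f i.+1) %/ 2^i).
have Ht : forall m, trunc z m = sval (f m).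
  elim => [|m IH].
    case: (f 0) => r [Hr _] /=. lia.
  rewrite /= IH /z.
  case: (f m.+1) => r [Hr Hp] /=.
  case: (f m) => r' [Hr' Hp'] /=.
  rewrite -[RHS](modn_small Hr) MODSPLIT. congr (_ + _).
  apply: (@INJ m); first done.
    by rewrite ltn_pmod // expn_gt0.
  move=> i Hi. rewrite (@MODINV m (r %% 2^m) r i) ?modn_mod // Hp ?Hp' //. lia.
exists z. apply: functional_extensionality => i.
rewrite PhiInv_par Ht. case: (f i.+1) => r [_ Hp] /=. by apply: Hp.
Qed.

Lemma Phi_spec v : PhiInv (Phi v) = v.
Proof.
rewrite /Phi. apply: (epsilon_spec (inhabits (fun _ : nat => false)) (fun x => PhiInv x = v)).
exact: SURJS.
Qed.

Lemma par_T x i : par (Tnat x) i = par x i.+1.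
Proof. by rewrite /par iterSr. Qed.

Lemma ARR m r s : 0 < m -> arrow (2^m) r s <->
  [/\ r < 2^m, s < 2^m & forall i, i.+1 < m -> par s i = par r i.+1].
Proof.
move=> Hm. have Hp : 0 < 2^m by rewrite expn_gt0.
split.
- have H : forall x, x %% 2^m = r -> Tnat x %% 2^m = s ->
     [/\ r < 2^m, s < 2^m & forall i, i.+1 < m -> par s i = par r i.+1].
    move=> x Er Es. split; [by rewrite -Er ltn_pmod | by rewrite -Es ltn_pmod |].
    move=> i Hi. rewrite -Es -Er.
    rewrite (@MODINV m (Tnat x %% 2^m) (Tnat x) i); [| by rewrite modn_mod | lia].
    rewrite (@MODINV m (x %% 2^m) x i.+1); [by rewrite par_T | by rewrite modn_mod | lia].
  case=> [[x [y [_ _ Er Es [Ho Ey]]]]|[x [y [_ _ Er Es [Ho Ey]]]]];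
    apply: (H x Er); rewrite /Tnat; [rewrite (negbTE Ho) | rewrite Ho]; by rewrite Ey.
- case=> Hr Hs Hpar.
  pose t := if par r m (+) par s m.-1 then 1 else 2.
  have Ht : odd t = par r m (+) par s m.-1 by rewrite /t; case: (_ (+) _).
  have Ht1 : 1 <= t by rewrite /t; case: (_ (+) _).
  pose x := r + 2^m * t.
  have Hx2 : 2 <= x.
    have : 2^m * 1 <= 2^m * t by rewrite leq_mul2l Ht1 orbT.
    rewrite /x. have : 2 <= 2^m by rewrite -(expn1 2) leq_exp2l.
    lia.
  have Exr : x %% 2^m = r by rewrite /x mulnC addnC modnMDl modn_small.
  have Exs : Tnat x %% 2^m = s.
    apply: (@INJ m); [by rewrite ltn_pmod | done |].
    move=> i Hi.
    rewrite (@MODINV m (Tnat x %% 2^m) (Tnat x) i); [| by rewrite modn_mod | lia].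
    rewrite par_T.
    case: (ltngtP i.+1 m) => [Hl|Hl|He].
    + by rewrite /x PARAGREE // Hpar.
    + lia.
    + have -> : i = m.-1 by lia.
      rewrite prednK // /x PARFLIP Ht. by case: (par r m); case: (par s m.-1).
  have HT : 0 < Tnat x by rewrite /Tnat; case: (odd x); lia.
  case Ho : (odd x).
  + right. exists x, (Tnat x). split => //; first lia. split => //. by rewrite /Tnat Ho.
  + left. exists x, (Tnat x). split => //; first lia. split; first by rewrite Ho. by rewrite /Tnat Ho.
Qed.

Definition mkv k a i := odd (\sum_(j < k) nat_of_bool (par a (i + j))).

Lemma HM_lt n k a : HMbar n k a < 2^n.
Proof. exact: trunc_lt. Qed.

Lemma HM_par n k a i : i < n -> par (HMbar n k a) i = mkv k a i.
Proof.
move=> H. rewrite /HMbar -PhiInv_par' // /HM Phi_spec /Mk /mkv.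
congr odd. apply: eq_bigr => j _. by rewrite PhiInv_ofnat.
Qed.

Lemma HM_char n k a r : r < 2^n -> (forall i, i < n -> par r i = mkv k a i) -> HMbar n k a = r.
Proof.
move=> Hr Hp. apply: (@INJ n) => //; first exact: HM_lt.
move=> i Hi. by rewrite HM_par // Hp.
Qed.

Lemma inClassE n k x a : inClass n k x a <-> a < 2^(n+k-1) /\ forall i, i < n -> mkv k a i = mkv k x i.
Proof.
split.
- case=> Ha E. split => // i Hi. by rewrite -(@HM_par n k a i Hi) -(@HM_par n k x i Hi) E.
- case=> Ha E. split => //. apply: HM_char; first exact: HM_lt.
  move=> i Hi. by rewrite HM_par // E.
Qed.

Lemma mkv_last k b i : mkv k.+1 b i = odd (\sum_(j < k) nat_of_bool (par b (i + j))) (+) par b (i + k).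
Proof. by rewrite /mkv big_ord_recr /= oddD oddb. Qed.

Lemma mkv_first k a : mkv k.+1 a 0 = par a 0 (+) odd (\sum_(j < k) nat_of_bool (par a j.+1)).
Proof. by rewrite /mkv big_ord_recl /= oddD oddb. Qed.


Definition AR (n k a b : nat) := forall i, i.+1 < (n + k - 1) -> par b i = par a i.+1.

Lemma SH (n k : nat) (hn : 1 <= n) (hk : 1 <= k) a b : AR n k a b -> forall i, i.+1 < n -> mkv k b i = mkv k a i.+1.
Proof.
move=> H i Hi. rewrite /mkv. congr odd. apply: eq_bigr => j _.
rewrite H ?addSn //. have := ltn_ord j. lia.
Qed.

Lemma ArrN (n k : nat) (hn : 1 <= n) (hk : 1 <= k) (a b : nat) : arrow (2^(n + k - 1)) a b <-> [/\ a < 2^(n + k - 1), b < 2^(n + k - 1) & AR n k a b].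
Proof. apply: ARR. lia. Qed.

Lemma Ufw (n k : nat) (hn : 1 <= n) (hk : 1 <= k) a b b' : b < 2^(n + k - 1) -> b' < 2^(n + k - 1) -> AR n k a b -> AR n k a b' ->
  mkv k b n.-1 = mkv k b' n.-1 -> b = b'.
Proof.
case: k hk => // k' _ Hb Hb' A1 A2 E.
apply: (@INJ (n + k'.+1 - 1)) => // i Hi.
case: (ltngtP i.+1 (n + k'.+1 - 1)) => [Hl|Hl|He]; [by rewrite A1 // A2| lia|].
move: E; rewrite !mkv_last.
have -> : \sum_(j < k') nat_of_bool (par b (n.-1 + j)) =
          \sum_(j < k') nat_of_bool (par b' (n.-1 + j)).
  apply: eq_bigr => j _. rewrite A1 ?A2 //; have := ltn_ord j; lia.
move/addbI. have -> : n.-1 + k' = i by move: He; lia. done.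
Qed.

Lemma Ubw (n k : nat) (hn : 1 <= n) (hk : 1 <= k) a a' b : a < 2^(n + k - 1) -> a' < 2^(n + k - 1) -> AR n k a b -> AR n k a' b ->
  mkv k a 0 = mkv k a' 0 -> a = a'.
Proof.
case: k hk => // k' _ Ha Ha' A1 A2 E.
apply: (@INJ (n + k'.+1 - 1)) => // i Hi.
case: i Hi => [|i] Hi; last by rewrite -A1 // A2.
move: E; rewrite !mkv_first.
have -> : \sum_(j < k') nat_of_bool (par a j.+1) =
          \sum_(j < k') nat_of_bool (par a' j.+1).
  apply: eq_bigr => j _. rewrite -A1 ?A2 //; have := ltn_ord j; lia.
by move/addIb.
Qed.

Lemma Efw (n k : nat) (hn : 1 <= n) (hk : 1 <= k) a (m : nat -> bool) : a < 2^(n + k - 1) -> exists b, [/\ b < 2^(n + k - 1), AR n k a b & mkv k b n.-1 = m n.-1].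
Proof.
case: k hk => // k' _ Ha.
pose c := m n.-1 (+) odd (\sum_(j < k') nat_of_bool (par a (n + j))).
pose w i := if i.+1 < (n + k'.+1 - 1) then par a i.+1 else c.
have [b [Hb Hp]] := SURJ (n + k'.+1 - 1) w.
exists b; split => //.
- move=> i Hi. rewrite Hp /w ?Hi //. lia.
- rewrite mkv_last.
  have -> : \sum_(j < k') nat_of_bool (par b (n.-1 + j)) =
            \sum_(j < k') nat_of_bool (par a (n + j)).
    apply: eq_bigr => j _. have := ltn_ord j. move=> Hj.
    rewrite Hp /w; last lia. case: ifP => H; last lia. congr (nat_of_bool (par a _)); lia.
  rewrite Hp /w; last (lia).
  case: ifP => H; first (move: H; lia).
  rewrite /c. by case: (m n.-1); case: (odd _).
Qed.

Lemma Ebw (n k : nat) (hn : 1 <= n) (hk : 1 <= k) b (m : nat -> bool) : b < 2^(n + k - 1) -> exists a, [/\ a < 2^(n + k - 1), AR n k a b & mkv k a 0 = m 0].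
Proof.
case: k hk => // k' _ Hb.
pose c := m 0 (+) odd (\sum_(j < k') nat_of_bool (par b j)).
pose w i := if i is i'.+1 then par b i' else c.
have [a [Ha Hp]] := SURJ (n + k'.+1 - 1) w.
exists a; split => //.
- move=> i Hi. by rewrite Hp.
- rewrite mkv_first.
  have -> : \sum_(j < k') nat_of_bool (par a j.+1) =
            \sum_(j < k') nat_of_bool (par b j).
    apply: eq_bigr => j _. have := ltn_ord j. move=> Hj.
    rewrite Hp //. lia.
  rewrite Hp /=; last (lia).
  rewrite /c. by case: (m 0); case: (odd _).
Qed.



Lemma ArrSmall n k x y : 0 < n -> arrow (2 ^ n) (HMbar n k x) (HMbar n k y) <->
  forall i, i.+1 < n -> mkv k y i = mkv k x i.+1.
Proof.
move=> hn. rewrite ARR //. split.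
- case=> _ _ H i Hi. rewrite -(@HM_par n k y i) //. rewrite -(@HM_par n k x i.+1) //; first exact: H. lia.
- move=> H; split; try exact: HM_lt. move=> i Hi.
  rewrite (@HM_par n k y i) ?(@HM_par n k x i.+1) //; [exact: H | lia].
Qed.

Theorem mainTheorem19 (n k x y : nat) (hn : 1 <= n) (hk : 1 <= k)
    (hx : x < 2 ^ (n + k - 1)) (hy : y < 2 ^ (n + k - 1)) :
  (arrow (2 ^ n) (HMbar n k x) (HMbar n k y) <->
     exists a b, [/\ inClass n k x a, inClass n k y b & arrow (2 ^ (n + k - 1)) a b])
  /\
  (arrow (2 ^ n) (HMbar n k x) (HMbar n k y) ->
     (forall a, inClass n k x a ->
        exists! b, inClass n k y b /\ arrow (2 ^ (n + k - 1)) a b) /\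
     (forall b, inClass n k y b ->
        exists! a, inClass n k x a /\ arrow (2 ^ (n + k - 1)) a b)).
Proof.
have AN := @ArrSmall n k x y hn.
have FW : arrow (2 ^ n) (HMbar n k x) (HMbar n k y) -> forall a, inClass n k x a ->
        exists! b, inClass n k y b /\ arrow (2 ^ (n + k - 1)) a b.
  move=> /AN Hn a /inClassE [Ha Ca].
  have [b [Hb Ab Eb]] := @Efw n k hn hk a (mkv k y) Ha.
  exists b; split.
    split; last by apply/(ArrN _ _ hn hk).
    apply/inClassE; split => // i Hi.
    case: (ltngtP i.+1 n) => [Hl|Hl|He].
    + rewrite (@SH n k hn hk _ _ Ab) // Ca //. by rewrite -Hn.
    + lia.
    + have -> : i = n.-1 by lia. done.
  move=> b' [/inClassE [Hb' Cb'] /(ArrN _ _ hn hk) [_ _ Ab']].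
  apply: (@Ufw n k hn hk _ _ _ Hb Hb' Ab Ab'). rewrite Eb Cb' //. lia.
have BW : arrow (2 ^ n) (HMbar n k x) (HMbar n k y) -> forall b, inClass n k y b ->
        exists! a, inClass n k x a /\ arrow (2 ^ (n + k - 1)) a b.
  move=> /AN Hn b /inClassE [Hb Cb].
  have [a [Ha Ab Ea]] := @Ebw n k hn hk b (mkv k x) Hb.
  exists a; split.
    split; last by apply/(ArrN _ _ hn hk).
    apply/inClassE; split => // i Hi.
    case: i Hi => [|i] Hi; first done.
    rewrite -(@SH n k hn hk _ _ Ab) // Cb; last lia. exact: Hn.
  move=> a' [/inClassE [Ha' Ca'] /(ArrN _ _ hn hk) [_ _ Ab']].
  apply: (@Ubw n k hn hk _ _ _ Ha Ha' Ab Ab'). by rewrite Ea Ca'.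
split; last by move=> H; split; [exact: FW | exact: BW].
split.
- move=> H. have [b [[Cb Ab] _]] := FW H x (conj hx erefl).
  by exists x, b.
- case=> a [b [/inClassE [Ha Ca] /inClassE [Hb Cb] /(ArrN _ _ hn hk) [_ _ Ab]]].
  apply/AN => i Hi. by rewrite -Cb ?(@SH n k hn hk _ _ Ab) // ?Ca //; lia.
Qed.
Print Assumptions mainTheorem19.
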